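(* Let $\kappa$ be a regular uncountable cardinal with $\kappa^{<\kappa}=\kappa$ and $\gamma^\omega<\kappa$ for all $\gamma<\kappa$, and let $I$ and $I_\alpha$ be as in the context. For every limit ordinal $\delta<\kappa$ and every $\nu\in I$ there is $\beta<\delta$ such that for every $\sigma\in I_\delta$ with $\sigma>\nu$ there is $\sigma'\in I_\beta$ with $\sigma\ge\sigma'\ge\nu$.
   Context: $I^0$: order $\kappa\times\mathbb Q$ lexicographically; $I^0$ is the set of $f:\omega\to\kappa\times\mathbb Q$, $f(n)=(f_1(n),f_2(n))$, with $\{n\mid f_1(n)\ne0\}$ finite, ordered by comparing at the least $n$ where they differ. Construct linear orders $I^0\subseteq I^1\subseteq\dots$ ($i<\kappa$): given $I^i$, for each $\nu\in I^i$ add a new element $\nu^{i+1}$ with $\nu^{i+1}<\nu$ and, for every $\tau\in I^i\setminus\{\nu\}$, $\tau<\nu^{i+1}$ iff $\tau<\nu$ (for distinct $\nu,\mu$, $\nu^{i+1}<\mu^{i+1}$ iff $\nu<\mu$); $I^{i+1}=I^i\cup\{\nu^{i+1}\mid\nu\in I^i\}$; at limits take unions; $I=\bigcup_{i<\kappa}I^i$. Representations: $I^0_\alpha=\{\nu\in I^0\mid\nu_1(n)<\alpha\ \forall n\}$; $I^{i+1}_\alpha=I^i_\alpha\cup\{\nu^{i+1}\mid\nu\in I^i_\alpha\}$; for limit $i$, $I^i_\alpha=\bigcup_{j<i}I^j_\alpha$; finally $I_\alpha=I^\alpha_\alpha$. *)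

(* Defs.v *)
From mathcomp Require Import all_boot all_order all_algebra.
From Stdlib Require Import List.
Set Implicit Arguments. Unset Strict Implicit. Unset Printing Implicit Defensive.

(* The cardinal kappa, modelled as a type K strictly well-ordered by klt; *)
(* the ordinals < kappa are the elements of K, and kappa is the order      *)
(* type of K.  k0 is the least element (the ordinal 0).                    *)

Section Kappa.
Variables (K : Type) (klt : K -> K -> Prop).

(* the initial segment {x | x < g} (i.e. the ordinal g as a set) *)
Definition seg (g : K) : Type := { x : K | klt x g }.

Definition injective_fun (A B : Type) (f : A -> B) : Prop :=
  forall a b, f a = f b -> a = b.

(* |A| < kappa  :<->  A injects into some ordinal g < kappa *)
Definition small (A : Type) : Prop :=
  exists g : K, exists f : A -> seg g, injective_fun f.

Definition strict_well_order : Prop :=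
  well_founded klt /\
  (forall x, ~ klt x x) /\
  (forall x y z, klt x y -> klt y z -> klt x z) /\
  (forall x y, klt x y \/ x = y \/ klt y x).

(* kappa is a cardinal: no ordinal g < kappa is equinumerous with kappa *)
Definition is_cardinal : Prop :=
  forall g : K, ~ exists f : K -> seg g, injective_fun f.

Definition uncountable : Prop :=
  ~ exists f : K -> nat, injective_fun f.

Definition regular : Prop :=
  forall X : K -> Prop, small { x : K | X x } ->
    exists b : K, forall x, X x -> klt x b.

(* kappa^{<kappa} = kappa : for each g < kappa, |kappa^g| <= kappa *)
Definition kappa_lt_kappa : Prop :=
  forall g : K, exists f : (seg g -> K) -> K, injective_fun f.

(* gamma^omega < kappa for all gamma < kappa *)
Definition omega_powers_small : Prop :=
  forall g : K, small (nat -> seg g).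

Definition is_limit (d : K) (k0 : K) : Prop :=
  d <> k0 /\ forall b, klt b d -> exists b', klt b b' /\ klt b' d.

End Kappa.

(* An element of I is coded as a pair (eta, s) where eta in I^0 and        *)
(* s = [i1; ...; ik] is a strictly increasing list of ordinals < kappa:    *)
(* it codes eta^{i1+1 ... ik+1}, i.e. ((eta^{i1+1})^{i2+1})...^{ik+1}.     *)
(* Thus nu^{i+1} (for nu in I^i) is coded by  succ_el nu i.               *)

Section Construction.
Variables (K : Type) (klt : K -> K -> Prop) (k0 : K).

Definition base := nat -> (K * rat)%type.
Definition elt := (base * list K)%type.

Definition in_I0 (eta : base) : Prop :=
  exists N, forall n, (N <= n)%N -> fst (eta n) = k0.

Definition increasing (s : list K) : Prop :=
  forall i j a b, (i < j)%N -> nth_error s i = Some a -> nth_error s j = Some b ->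
    klt a b.

Definition in_I (x : elt) : Prop := in_I0 (fst x) /\ increasing (snd x).

Definition in_Ii (i : K) (x : elt) : Prop :=
  in_I x /\ forall a, In a (snd x) -> klt a i.

Definition succ_el (x : elt) (i : K) : elt := (fst x, rcons (snd x) i).

Definition base_el (eta : base) : elt := (eta, nil).

Definition eq_el (x y : elt) : Prop :=
  (forall n, fst x n = fst y n) /\ snd x = snd y.

Definition lt_KQ (p q : K * rat) : Prop :=
  klt p.1 q.1 \/ (p.1 = q.1 /\ (p.2 < q.2)%R).

Definition lt_I0 (f g : base) : Prop :=
  exists n, (forall m, (m < n)%N -> f m = g m) /\ lt_KQ (f n) (g n).

(* I^alpha_alpha = I_alpha *)
Definition in_Ialpha (al : K) (x : elt) : Prop :=
  in_Ii al x /\ forall n, klt (fst (fst x n)) al.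

(* lt is the order of I produced by the construction in the context. *)
Definition construction_order (lt : elt -> elt -> Prop) : Prop :=
  (forall x, in_I x -> ~ lt x x) /\
  (forall x y z, in_I x -> in_I y -> in_I z -> lt x y -> lt y z -> lt x z) /\
  (forall x y, in_I x -> in_I y -> eq_el x y \/ lt x y \/ lt y x) /\
  (forall x x' y y', eq_el x x' -> eq_el y y' -> lt x y -> lt x' y') /\
  (forall eta th, in_I0 eta -> in_I0 th ->
     (lt (base_el eta) (base_el th) <-> lt_I0 eta th)) /\
  (forall i nu, in_Ii i nu -> lt (succ_el nu i) nu) /\
  (forall i nu tau, in_Ii i nu -> in_Ii i tau -> ~ eq_el tau nu ->
     (lt tau (succ_el nu i) <-> lt tau nu)) /\
  (forall i nu mu, in_Ii i nu -> in_Ii i mu -> ~ eq_el nu mu ->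
     (lt (succ_el nu i) (succ_el mu i) <-> lt nu mu)).

End Construction.

(* Main.v *)
Require Import Defs.
From mathcomp Require Import all_boot all_order all_algebra.
From Stdlib Require Import List.
From Stdlib Require Import Classical Lia.
From mathcomp Require Import zify.

Fixpoint inc {K} (klt : K -> K -> Prop) (l : list K) : Prop :=
  match l with nil => True | x :: l' => (forall y, In y l' -> klt x y) /\ inc klt l' end.

Lemma inc_increasing K (klt : K -> K -> Prop) l : increasing klt l <-> inc klt l.
Proof.
  induction l as [|x l IH]; simpl.
  - split; [auto|]. intros _ i j a b _ Ha. destruct i; discriminate.
  - split.
    + intros H. split.
      * intros y Hy. destruct (In_nth_error _ _ Hy) as [k Hk]. apply (H 0 (S k)); auto.
      * apply IH. intros i j a b Hij Ha Hb. apply (H (S i) (S j)); auto.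
    + intros [H1 H2] i j a b Hij Ha Hb. destruct i, j; simpl in *.
      * discriminate.
      * injection Ha as <-. apply H1. eapply nth_error_In; eauto.
      * discriminate.
      * apply IH in H2. apply (H2 i j); auto.
Qed.

Lemma inc_app K (klt : K -> K -> Prop) p q :
  inc klt (p ++ q)%list <-> inc klt p /\ inc klt q /\ (forall x y, In x p -> In y q -> klt x y).
Proof.
  induction p as [|a p IH]; simpl.
  - split; [tauto|]. intros [_ [H _]]; exact H.
  - rewrite IH. split.
    + intros [H1 [H2 [H3 H4]]]. split; [split|split; [auto|]].
      * intros y Hy; apply H1; apply in_or_app; auto.
      * exact H2.
      * intros x y [<-|Hx] Hy; [apply H1; apply in_or_app; auto| auto].
    + intros [[H1 H2] [H3 H4]]. split; [|split; [auto|split; auto]].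
      intros y Hy. apply in_app_or in Hy as [Hy|Hy]; auto.
Qed.

Lemma rcons_app K (s : list K) i : rcons s i = (s ++ i :: nil)%list.
Proof. induction s; simpl; congruence. Qed.

Fixpoint lst {K} (klt : K -> K -> Prop) (s t : list K) : Prop :=
  match s, t with
  | nil, _ => False
  | _ :: _, nil => True
  | i :: s', j :: t' => klt i j \/ (i = j /\ lst klt s' t')
  end.

Section L.
Variables (K : Type) (klt : K -> K -> Prop).
Hypothesis irr : forall x, ~ klt x x.
Hypothesis tr : forall x y z, klt x y -> klt y z -> klt x z.

Lemma lst_snoc_prefix t i : lst klt (t ++ i :: nil)%list t.
Proof. induction t; simpl; auto. Qed.

Lemma lst_ext_false s u : ~ lst klt s (s ++ u)%list.
Proof. induction s; simpl; auto. intros [H|[_ H]]; [apply (irr _ H)|auto]. Qed.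

Lemma lst_irrefl s : ~ lst klt s s.
Proof. intro H. apply (lst_ext_false s nil). rewrite app_nil_r; auto. Qed.

Lemma L1 s0 i t : (forall y, In y t -> klt y i) -> t <> s0 ->
  (lst klt (s0 ++ i :: nil)%list t <-> lst klt s0 t).
Proof.
  revert t; induction s0 as [|x s1 IH]; intros t Ht Hne; simpl.
  - destruct t as [|j t']; [congruence|]. simpl. split; [|tauto].
    intros [H|[_ []]]. apply (irr _ (tr _ _ _ H (Ht j (in_eq _ _)))).
  - destruct t as [|j t']; [tauto|].
    assert (Hd : x = j -> t' <> s1) by (intros -> ->; congruence).
    split; intros [H|[E H]]; auto; right; split; auto.
    + apply (IH t'); auto. intros y Hy; apply Ht; simpl; auto.
    + apply (IH t'); auto. intros y Hy; apply Ht; simpl; auto.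
Qed.

Lemma L2 s j t0 : (forall y, In y s -> klt y j) -> s <> t0 ->
  (lst klt s (t0 ++ j :: nil)%list <-> lst klt s t0).
Proof.
  revert s; induction t0 as [|y t1 IH]; intros s Hs Hne; simpl.
  - destruct s as [|x s']; simpl; [tauto|]. split; auto.
    intros _; left; apply Hs; simpl; auto.
  - destruct s as [|x s']; simpl; [tauto|].
    assert (Hd : x = y -> s' <> t1) by (intros -> ->; congruence).
    split; intros [H|[E H]]; auto; right; split; auto.
    + apply (IH s'); auto. intros z Hz; apply Hs; simpl; auto.
    + apply (IH s'); auto. intros z Hz; apply Hs; simpl; auto.
Qed.

Lemma L3 s0 t0 i : (forall y, In y s0 -> klt y i) -> (forall y, In y t0 -> klt y i) -> s0 <> t0 ->
  (lst klt (s0 ++ i :: nil)%list (t0 ++ i :: nil)%list <-> lst klt s0 t0).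
Proof.
  revert t0; induction s0 as [|x s1 IH]; intros t0 Hs Ht Hne; simpl.
  - destruct t0 as [|y t1]; [congruence|]. simpl. split; [|tauto].
    intros [H|[E _]].
    + apply (irr _ (tr _ _ _ H (Ht y (in_eq _ _)))).
    + subst. apply (irr _ (Ht y (in_eq _ _))).
  - destruct t0 as [|y t1]; simpl.
    + split; auto. intros _. left. apply Hs; simpl; auto.
    + assert (Hd : x = y -> s1 <> t1) by (intros -> ->; congruence).
      split; intros [H|[E H]]; auto; right; split; auto.
      * apply (IH t1); auto; intros z Hz; [apply Hs|apply Ht]; simpl; auto.
      * apply (IH t1); auto; intros z Hz; [apply Hs|apply Ht]; simpl; auto.
Qed.

Lemma lst_decomp s t : lst klt s t ->
  (exists u, s = (t ++ u)%list) \/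
  (exists p i j s' t', s = (p ++ i :: s')%list /\ t = (p ++ j :: t')%list /\ klt i j).
Proof.
  revert t; induction s as [|x s IH]; intros t H; simpl in H.
  - destruct H.
  - destruct t as [|y t].
    + left. exists (x :: s). reflexivity.
    + destruct H as [H|[<- H]].
      * right. exists nil, x, y, s, t. auto.
      * destruct (IH t H) as [[u ->]|[p [i [j [s' [t' [-> [-> Hij]]]]]]]].
        -- left. exists u. reflexivity.
        -- right. exists (x :: p), i, j, s', t'. auto.
Qed.

Lemma lst_diff p i j s' t' : klt i j -> lst klt (p ++ i :: s')%list (p ++ j :: t')%list.
Proof. intros H; induction p; simpl; auto. Qed.

Lemma lst_pre p i s' : s' <> nil -> lst klt (p ++ i :: s')%list (p ++ i :: nil)%list.
Proof. intros H; induction p; simpl; auto. destruct s'; [congruence|]. simpl; auto. Qed.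

End L.
Arguments L1 {K klt}. Arguments L2 {K klt}. Arguments L3 {K klt}. Arguments lst_ext_false {K klt}. Arguments lst_irrefl {K klt}. Arguments lst_snoc_prefix {K klt}. Arguments lst_decomp {K klt}. Arguments lst_diff {K klt}. Arguments lst_pre {K klt}.

Definition ltp {K} (klt : K -> K -> Prop) (x y : elt K) : Prop :=
  lt_I0 klt x.1 y.1 \/ ((forall n, x.1 n = y.1 n) /\ lst klt x.2 y.2).

Lemma last_dec {A} (l : list A) : l = nil \/ exists l' a, l = (l' ++ a :: nil)%list.
Proof.
  destruct l as [|x l]; [left; auto|right].
  destruct (exists_last (l := x :: l)) as [l' [a E]]; [discriminate|].
  exists l', a; exact E.
Qed.

Section C.
Variables (K : Type) (klt : K -> K -> Prop) (k0 : K) (lt : elt K -> elt K -> Prop).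
Hypothesis Hwo : strict_well_order klt.
Hypothesis Hlt : construction_order klt k0 lt.

Lemma kirr (x : K) : ~ klt x x. Proof. destruct Hwo as [_ [H _]]; apply H. Qed.
Lemma ktr (x y z : K) : klt x y -> klt y z -> klt x z. Proof. destruct Hwo as [_ [_ [H _]]]; apply H. Qed.
Lemma ktri (x y : K) : klt x y \/ x = y \/ klt y x. Proof. destruct Hwo as [_ [_ [_ H]]]; apply H. Qed.

Lemma lirr {x : elt K} : in_I klt k0 x -> ~ lt x x. Proof. destruct Hlt as [H _]; apply H. Qed.
Lemma ltr {x y z : elt K} : in_I klt k0 x -> in_I klt k0 y -> in_I klt k0 z -> lt x y -> lt y z -> lt x z.
Proof. destruct Hlt as [_ [H _]]; apply H. Qed.
Lemma ltri {x y : elt K} : in_I klt k0 x -> in_I klt k0 y -> eq_el x y \/ lt x y \/ lt y x.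
Proof. destruct Hlt as [_ [_ [H _]]]; apply H. Qed.
Lemma lcong {x x' y y' : elt K} : eq_el x x' -> eq_el y y' -> lt x y -> lt x' y'.
Proof. destruct Hlt as [_ [_ [_ [H _]]]]; apply H. Qed.

Lemma eq_el_sym (x y : elt K) : eq_el x y -> eq_el y x.
Proof. intros [H1 H2]; split; auto. Qed.
Lemma eq_el_refl (x : elt K) : eq_el x x.
Proof. split; auto. Qed.

Lemma lasym {x y : elt K} : in_I klt k0 x -> in_I klt k0 y -> lt x y -> lt y x -> False.
Proof. intros Hx Hy H1 H2. apply (lirr Hx). eapply ltr; eauto. Qed.

Lemma ltI0_irr {a b : base K} : (forall n, a n = b n) -> ~ lt_I0 klt a b.
Proof.
  intros E [n [_ H]]. rewrite E in H. destruct H as [H|[_ H]].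
  - apply (kirr _ H).
  - rewrite Order.POrderTheory.ltxx in H. discriminate.
Qed.

Lemma D1 {nu : elt K} {i} {tau : elt K} : in_I klt k0 (succ_el nu i) -> in_Ii klt k0 i nu -> in_Ii klt k0 i tau ->
  ~ eq_el tau nu -> (lt (succ_el nu i) tau <-> lt nu tau).
Proof.
  intros Hs Hn Ht Hne. destruct Hlt as [_ [_ [_ [_ [_ [Hsucc [Htau _]]]]]]].
  split; intros H.
  - destruct (ltri (proj1 Hn) (proj1 Ht)) as [E|[E|E]]; auto.
    + exfalso; apply Hne, eq_el_sym, E.
    + exfalso. apply (Htau i nu tau Hn Ht Hne) in E. eapply lasym; [exact Hs| exact (proj1 Ht)|eauto|eauto].
  - eapply ltr; [exact Hs|exact (proj1 Hn)|exact (proj1 Ht)| apply Hsucc; auto | exact H].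
Qed.

Lemma in_I_snoc {a : base K} {s0 i} : in_I klt k0 (a, (s0 ++ i :: nil)%list) ->
  in_Ii klt k0 i (a, s0) /\ (forall y, In y s0 -> klt y i).
Proof.
  intros [H0 Hi]. apply inc_increasing, inc_app in Hi as [Hs0 [_ Hx]].
  assert (Hy : forall y, In y s0 -> klt y i) by (intros y Hy; apply Hx; simpl; auto).
  split; auto. split; auto. split; auto. apply inc_increasing; auto.
Qed.

Lemma succ_eq (a : base K) s0 i : succ_el (a, s0) i = (a, (s0 ++ i :: nil)%list).
Proof. unfold succ_el; simpl; rewrite rcons_app; reflexivity. Qed.

Lemma charac n : forall x y : elt K, in_I klt k0 x -> in_I klt k0 y ->
  (length x.2 + length y.2 <= n)%coq_nat -> (lt x y <-> ltp klt x y).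
Proof.
  induction n as [|n IH]; intros [a s] [b t] Hx Hy Hlen; simpl in Hlen.
  - destruct s; [|simpl in Hlen; lia]. destruct t; [|simpl in Hlen; lia].
    destruct Hlt as [_ [_ [_ [_ [Hbase _]]]]].
    unfold ltp; simpl. change (a, [::]) with (base_el a). change (b, [::]) with (base_el b).
    rewrite Hbase; [|exact (proj1 Hx)|exact (proj1 Hy)]. tauto.
  -
    assert (Case1 : forall s0 i, s = (s0 ++ i :: nil)%list -> (forall y, In y t -> klt y i) ->
               (lt (a, s) (b, t) <-> ltp klt (a, s) (b, t))).
    { intros s0 i -> Ht. destruct (in_I_snoc Hx) as [Hx' Hs0].
      assert (Hy' : in_Ii klt k0 i (b, t)) by (split; auto).
      rewrite <- succ_eq in Hx |- *.
      destruct (classic (eq_el (b, t) (a, s0))) as [E|NE].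
      - split; intros _.
        + right. destruct E as [E1 E2]; simpl in *. split; [intros; auto|].
          rewrite E2 rcons_app. apply lst_snoc_prefix.
        + eapply lcong; [apply eq_el_refl| apply eq_el_sym, E|].
          destruct Hlt as [_ [_ [_ [_ [_ [Hsucc _]]]]]]. apply Hsucc; auto.
      - rewrite (D1 Hx Hx' Hy' NE). rewrite (IH (a, s0) (b, t) (proj1 Hx') Hy).
        2:{ simpl. rewrite length_app in Hlen. simpl in Hlen. lia. }
        unfold ltp; simpl. rewrite rcons_app.
        split; intros [H|[E H]]; auto; right; split; auto.
        + refine (proj2 (L1 kirr ktr s0 i t Ht _) H). intros ->. apply NE. split; simpl; auto.
        + refine (proj1 (L1 kirr ktr s0 i t Ht _) H). intros ->. apply NE. split; simpl; auto. }
    assert (Case2 : forall t0 j, t = (t0 ++ j :: nil)%list -> (forall y, In y s -> klt y j) ->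
               (lt (a, s) (b, t) <-> ltp klt (a, s) (b, t))).
    { intros t0 j -> Hs. destruct (in_I_snoc Hy) as [Hy' Ht0].
      assert (Hx' : in_Ii klt k0 j (a, s)) by (split; auto).
      rewrite <- succ_eq in Hy |- *.
      destruct (classic (eq_el (a, s) (b, t0))) as [E|NE].
      - split; intros H.
        + exfalso. destruct Hlt as [_ [_ [_ [_ [_ [Hsucc _]]]]]].
          apply (lasym Hx Hy H). eapply lcong; [apply eq_el_refl| apply eq_el_sym, E|]. apply Hsucc; auto.
        + exfalso. destruct E as [E1 E2]; simpl in *. unfold ltp in H; simpl in H.
          destruct H as [H|[_ H]]; [apply (ltI0_irr E1 H)|].
          rewrite rcons_app E2 in H. apply (lst_ext_false kirr _ _ H).
      - destruct Hlt as [_ [_ [_ [_ [_ [_ [Htau _]]]]]]].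
        rewrite (Htau j (b, t0) (a, s) Hy' Hx' NE). rewrite (IH (a, s) (b, t0) Hx (proj1 Hy')).
        2:{ simpl. rewrite length_app in Hlen. simpl in Hlen. lia. }
        unfold ltp; simpl. rewrite rcons_app.
        split; intros [H|[E H]]; auto; right; split; auto.
        + refine (proj2 (L2 s j t0 Hs _) H). intros ->. apply NE. split; simpl; auto.
        + refine (proj1 (L2 s j t0 Hs _) H). intros ->. apply NE. split; simpl; auto. }
    destruct (last_dec s) as [->|[s0 [i ->]]]; destruct (last_dec t) as [->|[t0 [j ->]]].
    + destruct Hlt as [_ [_ [_ [_ [Hbase _]]]]].
      unfold ltp; simpl. change (a, [::]) with (base_el a). change (b, [::]) with (base_el b).
      rewrite Hbase; [|exact (proj1 Hx)|exact (proj1 Hy)]. tauto.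
    + apply (Case2 t0 j); auto. intros y [].
    + apply (Case1 s0 i); auto. intros y [].
    + destruct (in_I_snoc Hx) as [Hx' Hs0]. destruct (in_I_snoc Hy) as [Hy' Ht0].
      destruct (ktri i j) as [Hij|[<-|Hji]].
      * apply (Case2 t0 j); auto. intros y Hy1. apply in_app_or in Hy1 as [Hy1|[<-|[]]]; auto.
        eapply ktr; eauto.
      * rewrite <- (succ_eq a) in Hx |- *. rewrite <- (succ_eq b) in Hy |- *.
        destruct (classic (eq_el (a, s0) (b, t0))) as [E|NE].
        -- split; intros H.
           ++ exfalso. apply (lirr Hy). eapply lcong; [|apply eq_el_refl|exact H].
              destruct E as [E1 E2]; split; simpl in *; auto. rewrite E2; auto.
           ++ exfalso. destruct E as [E1 E2]; simpl in *. unfold ltp in H; simpl in H.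
              destruct H as [H|[_ H]]; [apply (ltI0_irr E1 H)|].
              rewrite E2 in H. apply (lst_irrefl kirr _ H).
        -- destruct Hlt as [_ [_ [_ [_ [_ [_ [_ Hsm]]]]]]].
           rewrite (Hsm i (a, s0) (b, t0) Hx' Hy' NE). rewrite (IH (a, s0) (b, t0) (proj1 Hx') (proj1 Hy')).
           2:{ simpl. rewrite !length_app in Hlen. simpl in Hlen. lia. }
           unfold ltp; simpl. rewrite !rcons_app.
           split; intros [H|[E H]]; auto; right; split; auto.
           ++ refine (proj2 (L3 kirr ktr s0 t0 i Hs0 Ht0 _) H). intros ->. apply NE. split; simpl; auto.
           ++ refine (proj1 (L3 kirr ktr s0 t0 i Hs0 Ht0 _) H). intros ->. apply NE. split; simpl; auto.
      * apply (Case1 s0 i); auto. intros y Hy1. apply in_app_or in Hy1 as [Hy1|[<-|[]]]; auto.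
        eapply ktr; eauto.
Qed.

End C.
Arguments ktri {K klt}. Arguments ktr {K klt}. Arguments kirr {K klt}. Arguments charac {K klt k0 lt}.

From mathcomp Require Import lra.

Lemma bound_list K (klt : K -> K -> Prop) (k0 : K) (Hwo : strict_well_order klt)
  (Hk0 : forall x, ~ klt x k0) delta (Hd : is_limit klt delta k0) (L : list K) :
  exists b, klt b delta /\ klt k0 b /\ forall x, In x L -> klt x delta -> klt x b.
Proof.
  destruct Hd as [Hdk Hlim].
  induction L as [|x L IH].
  - assert (H0 : klt k0 delta).
    { destruct (ktri Hwo k0 delta) as [H|[H|H]]; auto. congruence. exfalso; apply (Hk0 _ H). }
    destruct (Hlim _ H0) as [b' [H1 H2]]. exists b'. split; auto. split; auto. intros x [].
  - destruct IH as [b [Hb1 [Hb2 Hb3]]].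
    destruct (classic (klt x delta)) as [Hx|Hx].
    + destruct (ktri Hwo x b) as [H|H].
      * exists b. split; auto. split; auto. intros y [<-|Hy] Hyd; auto.
      * destruct (Hlim _ Hx) as [b' [H1 H2]].
        assert (Hbb : klt b b') by (destruct H as [<-|H]; [exact H1| exact (ktr Hwo _ _ _ H H1)]).
        exists b'. split; auto. split; [exact (ktr Hwo _ _ _ Hb2 Hbb)|].
        intros y [<-|Hy] Hyd; auto. exact (ktr Hwo _ _ _ (Hb3 y Hy Hyd) Hbb).
    + exists b. split; auto. split; auto. intros y [<-|Hy] Hyd; auto. contradiction.
Qed.

Theorem mainTheorem12
  (K : Type) (klt : K -> K -> Prop) (k0 : K)
  (Hwo : strict_well_order klt)
  (Hk0 : forall x, ~ klt x k0)
  (Hcard : is_cardinal klt)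
  (Hunc : uncountable K)
  (Hreg : regular klt)
  (Hpow : kappa_lt_kappa klt)
  (Homega : omega_powers_small klt)
  (lt : elt K -> elt K -> Prop)
  (Hlt : construction_order klt k0 lt) :
  forall (delta : K), is_limit klt delta k0 ->
  forall nu : elt K, in_I klt k0 nu ->
  exists beta : K, klt beta delta /\
    forall sigma : elt K, in_Ialpha klt k0 delta sigma -> lt nu sigma ->
      exists sigma' : elt K, in_Ialpha klt k0 beta sigma' /\
        (eq_el sigma sigma' \/ lt sigma' sigma) /\
        (eq_el sigma' nu \/ lt nu sigma').
Proof.
  intros delta Hd [eta s] Hnu.
  have CH : forall x y, in_I klt k0 x -> in_I klt k0 y -> (lt x y <-> ltp klt x y) :=
    fun x y hx hy => charac Hwo Hlt _ x y hx hy (le_n _).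
  destruct Hnu as [[N HN] Hsinc] eqn:Hnu0.
  destruct (bound_list _ _ _ Hwo Hk0 _ Hd (List.map (fun m => (eta m).1) (List.seq 0 N) ++ s)%list)
    as [b [Hbd [Hkb HL]]].
  assert (P : forall m, klt (eta m).1 delta -> klt (eta m).1 b).
  { intros m Hm. case: (ltnP m N) => HmN.
    - apply HL; auto. apply in_or_app; left. apply in_map_iff. exists m; split; auto.
      apply in_seq. lia.
    - rewrite (HN m HmN). exact Hkb. }
  assert (Q : forall x, In x s -> klt x delta -> klt x b).
  { intros x Hx Hxd. apply HL; auto. apply in_or_app; right; auto. }
  exists b. split; auto.
  intros [th t] Hsig Hlt0.
  destruct Hsig as [[HIs Hts] Hths]. simpl in Hts, Hths.
  have Hlt' := Hlt0.
  apply (CH _ _ Hnu HIs) in Hlt'. unfold ltp in Hlt'; simpl in Hlt'.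
  destruct Hlt' as [[n [Hpre Hn]] | [E Hl]].
  - assert (Hr : exists r : rat, lt_KQ klt (eta n) ((eta n).1, r) /\ lt_KQ klt ((eta n).1, r) (th n)
                  /\ klt (eta n).1 delta).
    { destruct Hn as [Hk|[Ek Hq]].
      - exists ((eta n).2 + 1)%R. split; [right; split; [reflexivity|simpl; lra]|].
        split; [left; exact Hk|]. eapply (ktr Hwo); [exact Hk|apply Hths].
      - exists (((eta n).2 + (th n).2) / 2)%R.
        split; [right; split; [reflexivity|simpl; lra]|].
        split; [right; split; [exact Ek|simpl; lra]|]. rewrite Ek; apply Hths. }
    destruct Hr as [r [H1 [H2 H3]]].
    pose zeta : base K := fun m => if (m < n)%N then eta m else if m == n then ((eta n).1, r) else (k0, 0%R).
    assert (HzI : in_I klt k0 (zeta, [::])).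
    { split; [|apply inc_increasing; exact I].
      exists n.+1. intros m Hm. rewrite /zeta /=. destruct (m < n)%N eqn:E1; [lia|].
      destruct (m == n) eqn:E2; [move/eqP: E2 => E2; lia|reflexivity]. }
    assert (Hnz : lt_I0 klt eta zeta).
    { exists n. split.
      - intros m Hm. rewrite /zeta /= Hm. reflexivity.
      - rewrite /zeta /= ltnn eqxx. exact H1. }
    assert (Hzt : lt_I0 klt zeta th).
    { exists n. split.
      - intros m Hm. rewrite /zeta /= Hm. apply Hpre; auto.
      - rewrite /zeta /= ltnn eqxx. exact H2. }
    exists (zeta, [::]). split; [|split].
    + split; [split; [exact HzI| intros a []]|].
      intros m. simpl. rewrite /zeta /=. destruct (m < n)%N eqn:E1.
      * apply P. rewrite (Hpre m E1). apply Hths.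
      * destruct (m == n) eqn:E2; simpl; [|exact Hkb]. apply P. exact H3.
    + right. apply (proj2 (CH _ _ HzI HIs)). left; exact Hzt.
    + right. apply (proj2 (CH _ _ Hnu HzI)). left; exact Hnz.
  - assert (Pb : forall m, klt (eta m).1 b) by (intros m; apply P; rewrite E; apply Hths).
    destruct (lst_decomp _ _ Hl) as [[u Hu]|[p [i [j [s' [t' [Hs [Ht Hij]]]]]]]].
    + exists (th, t). split; [|split].
      * split; [split; [exact HIs|]|].
        -- intros a Ha. apply Q; [|apply Hts; auto]. rewrite Hu. apply in_or_app; left; auto.
        -- intros m; simpl. rewrite <- E. apply Pb.
      * left. split; auto.
      * right. exact Hlt0.
    + apply inc_increasing in Hsinc as Hsinc'. rewrite Hs in Hsinc'.
      apply inc_app in Hsinc' as [Hp [Hi Hcross]].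
      assert (Hinc : increasing klt (p ++ [:: i])%list).
      { apply inc_increasing, inc_app. split; auto. split; [simpl; split; auto; intros y []|].
        intros x y Hx [<-|[]]. apply Hcross; simpl; auto. }
      assert (HzI : in_I klt k0 (eta, (p ++ [:: i])%list)) by (split; [exact (proj1 Hnu)|exact Hinc]).
      exists (eta, (p ++ [:: i])%list). split; [|split].
      * split; [split; [exact HzI|]|].
        -- intros a Ha; simpl in Ha. apply in_app_or in Ha as [Ha|[<-|[]]].
           ++ apply Q; [rewrite Hs; apply in_or_app; left; auto|].
              apply Hts. rewrite Ht; apply in_or_app; left; auto.
           ++ apply Q; [rewrite Hs; apply in_or_app; right; simpl; auto|].
              eapply (ktr Hwo); [exact Hij|]. apply Hts. rewrite Ht; apply in_or_app; right; simpl; auto.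
        -- intros m; simpl. apply Pb.
      * right. apply (proj2 (CH _ _ HzI HIs)). right. split; [intros m; apply E|].
        simpl. rewrite Ht. apply lst_diff. exact Hij.
      * destruct s' as [|x s''].
        -- left. split; [intros m; reflexivity|]. simpl. rewrite Hs. reflexivity.
        -- right. apply (proj2 (CH _ _ Hnu HzI)). right. split; [intros m; reflexivity|].
           simpl. rewrite Hs. apply lst_pre. discriminate.
Qed.
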